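(* There is an injective algebra homomorphism $$\Theta:\ \mathsf{H}\longrightarrow \mathbb{C}[y_1^{\pm1},\ldots,y_n^{\pm1}]\#_\alpha G$$ such that, for all $i\in\{1,\ldots,n\}$, $$\Theta(x_i)=y_i-\left(\frac{\zeta t_i}{\zeta-1}\right)y_{i+1}^{-1}g_i,\qquad \Theta(g_i)=g_i$$ (indices modulo $n$, so $y_{n+1}=y_1$).
   Context: Fix integers $n\ge 3$ and $\ell\ge 2$, and let $\zeta$ be a primitive $\ell$-th root of unity. All subscripts are taken modulo $n$ (e.g. $x_{n+1}=x_1$). Let $V=\mathbb{C}^n$ with standard basis $x_1,\ldots,x_n$, and let $G$ be the group of all diagonal matrices $g\in SL_n(\mathbb{C})$ with $g^\ell=1$; $G$ acts on $V$ and hence on the tensor algebra $TV$. For $i=1,\ldots,n$ let $g_i\in G$ be given by $g_i(x_i)=\zeta x_i$, $g_i(x_{i+1})=\zeta^{-1}x_{i+1}$, $g_i(x_j)=x_j$ otherwise; then $g_1,\ldots,g_{n-1}$ freely generate $G\cong(\mathbb{Z}/\ell\mathbb{Z})^{n-1}$ and $g_n=g_1^{-1}\cdots g_{n-1}^{-1}$. Define the 2-cocycle $\alpha$ by $\alpha(g_1^{i_1}\cdots g_{n-1}^{i_{n-1}},g_1^{j_1}\cdots g_{n-1}^{j_{n-1}})=\zeta^{-i_1j_2-i_2j_3-\cdots-i_{n-2}j_{n-1}}$. For an algebra $E$ with $G$-action, $E\#_\alpha G$ is $E\otimes\mathbb{C}G$ with product $(r\otimes g)(s\otimes h)=\alpha(g,h)\,r\,(g\cdot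 s)\otimes gh$; the product of $g,h\in G$ in it is written $g*h=\alpha(g,h)gh$. Let $t=(t_1,\ldots,t_n)\in\mathbb{C}^n$. $\mathsf{H}$ is the quotient of $TV\#_\alpha G$ by the relations $x_ix_{i+1}-x_{i+1}x_i=t_ig_i$ for all $i$, and $x_ix_j-x_jx_i=0$ for all $i,j\in\{1,\ldots,n\}$ with $|i-j|\notin\{1,n-1\}$. The group $G$ acts on the Laurent polynomial algebra $\mathbb{C}[y_1^{\pm1},\ldots,y_n^{\pm1}]$ by $g_i\cdot y_1^{p_1}\cdots y_n^{p_n}=\zeta^{p_i-p_{i+1}}y_1^{p_1}\cdots y_n^{p_n}$ for $i=1,\ldots,n-1$ and $p\in\mathbb{Z}^n$. *)

(* Defs.v *)
From HB Require Import structures.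
From mathcomp Require Import all_boot all_order all_algebra all_field.
Set Implicit Arguments. Unset Strict Implicit. Unset Printing Implicit Defensive.
Import Order.TTheory GRing.Theory Num.Theory.
Local Open Scope ring_scope.

(* Conventions (0-based): the paper's x_1..x_n are x_0..x_{n-1} indexed by 'I_n;
   the paper's generators g_1..g_{n-1} of G are indexed by 'I_n.-1.
   An element g = g_1^{i_1} ... g_{n-1}^{i_{n-1}} of G is represented by its
   coordinate vector (i_1,...,i_{n-1}) in (Z/l)^{n-1}; the group law is
   coordinatewise addition. *)

Section Defs.
Variables (C : numClosedFieldType) (n l : nat) (zeta : C).

Definition G := {ffun 'I_n.-1 -> 'Z_l}.

(* zeta^z for z in Z/l (well defined since zeta^l = 1) *)
Definition zpow (z : 'Z_l) : C := zeta ^+ (nat_of_ord z).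

(* i_{j+1}(g) for 0-based j; 0 outside 0..n-2 *)
Definition crd (g : G) (j : nat) : 'Z_l := oapp g 0 (insub j).

(* g_i, 0-based i : 'I_n ; the last one is g_n = g_1^{-1}...g_{n-1}^{-1} *)
Definition gen (i : 'I_n) : G :=
  if (i < n.-1)%N then [ffun k : 'I_n.-1 => ((k : nat) == i)%:R]
  else [ffun _ => -1].

(* scalar by which g acts on x_j (0-based j) : diagonal entry of g *)
Definition eig (g : G) (j : nat) : C :=
  zpow (crd g j - (if j is j'.+1 then crd g j' else 0)).

Definition alpha (g h : G) : C :=
  zpow (- \sum_(k < n.-2) crd g k * crd h k.+1).

(* basis: (word in x's, group element) = x_{w_1}...x_{w_k} # g *)
Definition SKey := (seq 'I_n * G)%type.
Definition S := seq (C * SKey).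

Definition coefS (a : S) (k : SKey) : C := \sum_(x <- a | x.2 == k) x.1.
Definition eqS (a b : S) : Prop := forall k, coefS a k = coefS b k.

Definition chi (g : G) (w : seq 'I_n) : C := \prod_(j <- w) eig g j.

Definition mulS (a b : S) : S :=
  [seq (x.1 * y.1 * alpha x.2.2 y.2.2 * chi x.2.2 y.2.1,
        (x.2.1 ++ y.2.1, x.2.2 + y.2.2)) | x <- a, y <- b].
Definition scaleS (c : C) (a : S) : S := [seq (c * x.1, x.2) | x <- a].
Definition oneS : S := [:: (1, ([::], 0))].
Definition xS (i : 'I_n) : S := [:: (1, ([:: i], 0))].
Definition gS (g : G) : S := [:: (1, ([::], g))].

(* the defining relations of H (as elements of TV #_alpha G) *)
Definition rels (t : 'I_n -> C) : seq S :=
  [seq mulS (xS i) (xS (ordS i)) ++ scaleS (-1) (mulS (xS (ordS i)) (xS i))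
        ++ scaleS (- t i) (gS (gen i)) | i <- enum 'I_n]
  ++ [seq mulS (xS p.1) (xS p.2) ++ scaleS (-1) (mulS (xS p.2) (xS p.1))
        | p <- enum [pred p : 'I_n * 'I_n |
             let d := `|(p.1 : int) - (p.2 : int)|%N in (d != 1%N) && (d != n.-1)]].

Definition inIdeal (t : 'I_n -> C) (a : S) : Prop :=
  exists s : seq (S * S * S),
    (forall x, x \in s -> x.1.2 \in rels t) /\
    eqS a (flatten [seq mulS (mulS x.1.1 x.1.2) x.2 | x <- s]).

(* basis: (exponent vector p in Z^n, group element) = y^p # g *)
Definition Zn := {ffun 'I_n -> int}.
Definition TKey := (Zn * G)%type.
Definition T := seq (C * TKey).

Definition coefT (a : T) (k : TKey) : C := \sum_(x <- a | x.2 == k) x.1.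
Definition eqT (a b : T) : Prop := forall k, coefT a k = coefT b k.

Definition pat (p : Zn) (j : nat) : int := oapp p 0 (insub j).

(* action of g = prod g_k^{i_k} on y^p : prod zeta^{i_k (p_k - p_{k+1})} *)
Definition yact (g : G) (p : Zn) : C :=
  zpow (\sum_(k < n.-1) crd g k * (pat p k - pat p k.+1)%:~R).

Definition mulT (a b : T) : T :=
  [seq (x.1 * y.1 * alpha x.2.2 y.2.2 * yact x.2.2 y.2.1,
        (x.2.1 + y.2.1, x.2.2 + y.2.2)) | x <- a, y <- b].
Definition scaleT (c : C) (a : T) : T := [seq (c * x.1, x.2) | x <- a].
Definition oneT : T := [:: (1, (0, 0))].
Definition gT (g : G) : T := [:: (1, (0, g))].
Definition ey (i : 'I_n) : Zn := [ffun k => ((k == i) : nat)%:Z].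

Definition thetaX (t : 'I_n -> C) (i : 'I_n) : T :=
  [:: (1, (ey i, 0)); (- (zeta * t i / (zeta - 1)), (- ey (ordS i), gen i))].

End Defs.

(* Main.v *)
Require Import Defs.
From HB Require Import structures.
From mathcomp Require Import all_boot all_order all_algebra all_field.
From mathcomp Require Import ring zify.
Import Order.TTheory GRing.Theory Num.Theory.
Local Open Scope ring_scope.
Set Implicit Arguments. Unset Strict Implicit. Unset Printing Implicit Defensive.

Section Lin.
Variable (C : numClosedFieldType).
Definition lin {K : Type} (a : seq (C * K)) (F : K -> C) : C :=
  \sum_(x <- a) x.1 * F x.2.
Definition leqv {K : Type} (a b : seq (C*K)) := forall F, lin a F = lin b F.

Lemma lin_nil K F : lin (@nil (C*K)) F = 0.
Proof. by rewrite /lin big_nil. Qed.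
Lemma lin_cons K (x : C*K) a F : lin (x::a) F = x.1 * F x.2 + lin a F.
Proof. by rewrite /lin big_cons. Qed.
Lemma lin_cat K (a b : seq (C*K)) F : lin (a++b) F = lin a F + lin b F.
Proof. by rewrite /lin big_cat. Qed.
Lemma lin_ext K (a : seq (C*K)) (F G : K -> C) : F =1 G -> lin a F = lin a G.
Proof. by move=> e; apply: eq_bigr => x _; rewrite e. Qed.
Lemma linZ K (a : seq (C*K)) c (F : K->C) : lin a (fun k => c * F k) = c * lin a F.
Proof. rewrite /lin mulr_sumr; apply: eq_bigr => x _; ring. Qed.
Lemma linD K (a : seq (C*K)) (F G : K -> C) :
  lin a (fun k => F k + G k) = lin a F + lin a G.
Proof. rewrite /lin -big_split; apply: eq_bigr => x _ /=; ring. Qed.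
Lemma lin0 K (a : seq (C*K)) : lin a (fun _ : K => 0) = 0.
Proof. by rewrite /lin big1 // => x _; rewrite mulr0. Qed.
Lemma lin_map K K' (f : C*K -> C*K') a F :
  lin (map f a) F = \sum_(x <- a) (f x).1 * F (f x).2.
Proof. by rewrite /lin big_map. Qed.
Lemma lin_exch K K' (a : seq (C*K)) (b : seq (C*K')) (G : K -> K' -> C) :
  lin a (fun k => lin b (G k)) = lin b (fun k' => lin a (fun k => G k k')).
Proof.
rewrite /lin; under eq_bigr do rewrite mulr_sumr.
rewrite exchange_big; apply: eq_bigr => y _; rewrite mulr_sumr.
apply: eq_bigr => x _; ring.
Qed.
Lemma lin_flatten K K' (f : K' -> seq (C*K)) (a : seq K') F :
  lin (flatten (map f a)) F = \sum_(x <- a) lin (f x) F.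
Proof. by rewrite /lin big_flatten /= big_map. Qed.
Lemma lin_allpairs K A B (f : A -> B -> C * K) a b F :
  lin [seq f x y | x <- a, y <- b] F = \sum_(x<-a) \sum_(y <- b) (f x y).1 * F (f x y).2.
Proof. by rewrite /lin big_allpairs_dep. Qed.

Definition coef {K : eqType} (a : seq (C*K)) k := \sum_(x <- a | x.2 == k) x.1.
Lemma coef_lin (K : eqType) (a : seq (C*K)) k : coef a k = lin a (fun k' => (k' == k)%:R).
Proof.
rewrite /coef /lin big_mkcond; apply: eq_bigr => x _.
by case: (x.2 == k); rewrite ?mulr1 ?mulr0.
Qed.
Lemma lin_coef (K : eqType) (a : seq (C*K)) (L : seq K) F : uniq L ->
  (forall x, x \in a -> x.2 \in L) -> lin a F = \sum_(k <- L) coef a k * F k.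
Proof.
move=> uL aL; rewrite /coef; under eq_bigr do rewrite big_distrl.
rewrite (exchange_big_dep predT) //= /lin big_seq [RHS]big_seq.
apply: eq_bigr => x xa.
rewrite -big_filter (@eq_filter _ _ (pred1 x.2)); last by move=> k /=; rewrite eq_sym.
by rewrite filter_pred1_uniq ?aL // big_cons big_nil addr0.
Qed.
Lemma leqvP (K : eqType) (a b : seq (C*K)) :
  (forall k, coef a k = coef b k) <-> leqv a b.
Proof.
split=> [e F|e k]; last by rewrite !coef_lin e.
have uL := undup_uniq (map snd (a ++ b)).
rewrite (lin_coef F uL) ?(lin_coef F uL (a:=b)).
- by apply: eq_bigr => k _; rewrite e.
- by move=> x xb; rewrite mem_undup map_f // mem_cat xb orbT.
- by move=> x xa; rewrite mem_undup map_f // mem_cat xa.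
Qed.
End Lin.

Lemma zeta_neq1 (C : numClosedFieldType) l (z : C) : (1 < l)%N -> l.-primitive_root z -> z != 1.
Proof. move=> hl hz; have := eq_prim_root_expr hz 1 0; rewrite expr1 expr0 => ->.
by rewrite eqn_mod_dvd // subn0 dvdn1; move: hl; case: (l) => [|[|]]. Qed.
Lemma zeta_neq0 (C : numClosedFieldType) l (z : C) : (1 < l)%N -> l.-primitive_root z -> z != 0.
Proof. move=> hl hz; apply/eqP => e; have := prim_expr_order hz; rewrite e expr0n.
by move: hl; case: (l) => [|l'] //= _ /eqP; rewrite eq_sym oner_eq0. Qed.

Section Alg.
Variables (C : numClosedFieldType) (m l : nat) (zeta : C).
Hypothesis hl : (1 < l)%N.
Hypothesis hz : l.-primitive_root zeta.
Local Notation n := m.+3.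
Local Notation GG := (G n l).
Local Notation zp := (@zpow C l zeta).

Lemma zpowD (a b : 'Z_l) : zp (a + b) = zp a * zp b.
Proof. by rewrite /zpow /= [X in (_ %% X)%N](Zp_cast hl) prim_expr_mod // exprD. Qed.
Lemma zpow0 : zp 0 = 1.
Proof. by rewrite /zpow /= expr0. Qed.
Lemma zpowN (a : 'Z_l) : zp (- a) * zp a = 1.
Proof. by rewrite -zpowD addNr zpow0. Qed.
Lemma zpow1 : zp 1 = zeta.
Proof. by rewrite /zpow /= modn_small // expr1. Qed.
Lemma zpow_neq0 (a : 'Z_l) : zp a != 0.
Proof. by apply/negP => /eqP e; have := zpowN a; rewrite e mulr0 => /eqP; rewrite eq_sym oner_eq0. Qed.

End Alg.

Section Exps.
Variables (m l : nat).
Local Notation n := m.+3.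
Local Notation GG := (G n l).

Lemma crd_ord (g : GG) (k : 'I_n.-1) : crd g k = g k.
Proof. by rewrite /crd valK. Qed.
Lemma crd_out (g : GG) j : (n.-1 <= j)%N -> crd g j = 0.
Proof. by move=> h; rewrite /crd insubN // -leqNgt. Qed.
Lemma crdD (g h : GG) j : crd (g + h) j = crd g j + crd h j.
Proof. by rewrite /crd; case: insubP => [k _ _|_] /=; rewrite ?ffunE ?addr0. Qed.
Lemma crd0 j : crd (0 : GG) j = 0.
Proof. by rewrite /crd; case: insubP => [k _ _|_] /=; rewrite ?ffunE. Qed.
Lemma crdN (g : GG) j : crd (- g) j = - crd g j.
Proof. by rewrite /crd; case: insubP => [k _ _|_] /=; rewrite ?ffunE ?oppr0. Qed.

Definition Bx (g h : GG) : 'Z_l := \sum_(k < n.-2) crd g k * crd h k.+1.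
Definition Yx (g : GG) (p : Zn n) : 'Z_l :=
  \sum_(k < n.-1) crd g k * (pat p k - pat p k.+1)%:~R.
Definition Ex (g : GG) (j : nat) : 'Z_l :=
  crd g j - (if j is j'.+1 then crd g j' else 0).

Lemma BxDl g h k : Bx (g + h) k = Bx g k + Bx h k.
Proof. by rewrite /Bx -big_split; apply: eq_bigr => i _; rewrite crdD mulrDl. Qed.
Lemma BxDr g h k : Bx k (g + h) = Bx k g + Bx k h.
Proof. by rewrite /Bx -big_split; apply: eq_bigr => i _; rewrite crdD mulrDr. Qed.
Lemma Bx0l g : Bx 0 g = 0.
Proof. by rewrite /Bx big1 // => i _; rewrite crd0 mul0r. Qed.
Lemma Bx0r g : Bx g 0 = 0.
Proof. by rewrite /Bx big1 // => i _; rewrite crd0 mulr0. Qed.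

Lemma patD (p q : Zn n) k : pat (p + q) k = pat p k + pat q k.
Proof. by rewrite /pat; case: insubP => [k' _ _|_] /=; rewrite ?ffunE. Qed.
Lemma patN (p : Zn n) k : pat (- p) k = - pat p k.
Proof. by rewrite /pat; case: insubP => [k' _ _|_] /=; rewrite ?ffunE ?oppr0. Qed.
Lemma pat0 k : pat (0 : Zn n) k = 0.
Proof. by rewrite /pat; case: insubP => [k' _ _|_] /=; rewrite ?ffunE. Qed.
Lemma pat_ey (j : 'I_n) k : pat (ey j) k = ((k == j : bool) : nat)%:Z.
Proof.
rewrite /pat; case: insubP => [k' _ <-|hk] /=; first by rewrite ffunE.
case: eqP => // e; move: hk; by rewrite e ltn_ord.
Qed.

Lemma YxDl g h p : Yx (g + h) p = Yx g p + Yx h p.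
Proof. by rewrite /Yx -big_split; apply: eq_bigr => i _; rewrite crdD mulrDl. Qed.
Lemma YxDr g p q : Yx g (p + q) = Yx g p + Yx g q.
Proof.
rewrite /Yx -big_split; apply: eq_bigr => i _; rewrite !patD /=.
by rewrite !(intrD, intrB); ring.
Qed.
Lemma YxN g p : Yx g (- p) = - Yx g p.
Proof.
rewrite /Yx -sumrN; apply: eq_bigr => i _; rewrite !patN /=.
by rewrite !(intrD, intrB, intrN); ring.
Qed.
Lemma Yx0l p : Yx 0 p = 0.
Proof. by rewrite /Yx big1 // => i _; rewrite crd0 mul0r. Qed.
Lemma Yx0r g : Yx g 0 = 0.
Proof. by rewrite /Yx big1 // => i _; rewrite !pat0 subr0 mulr0. Qed.

Lemma sum_delta (F : nat -> 'Z_l) N j :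
  \sum_(k < N) (if (k:nat) == j then F k else 0) = if (j < N)%N then F j else 0.
Proof.
elim: N => [|N IH]; first by rewrite big_ord0.
rewrite big_ord_recr /= IH.
case: eqP => [<-|ne]; first by rewrite ltnn ltnSn add0r.
rewrite addr0; have -> : (j < N.+1)%N = (j < N)%N by apply/idP/idP => h1; lia.
by [].
Qed.

Lemma natb_intr (b : bool) : (((b : nat)%:Z)%:~R : 'Z_l) = if b then 1 else 0.
Proof. by case: b. Qed.

Lemma YxA g (j : 'I_n) : Yx g (ey j) = Ex g j.
Proof.
rewrite /Yx /Ex.
under eq_bigr do rewrite !pat_ey intrB !natb_intr mulrBr.
rewrite sumrB.
have -> : \sum_(i < n.-1) crd g i * (if (i:nat) == j then 1 else 0) =
          \sum_(i < n.-1) (if (i:nat) == j then crd g i else 0).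
  by apply: eq_bigr => i _; case: eqP; rewrite ?mulr1 ?mulr0.
rewrite sum_delta; congr (_ - _).
  by case: ifP => // h; rewrite crd_out // leqNgt h.
case: (nat_of_ord j) (ltn_ord j) => [|j'] hj.
  by rewrite big1 // => i _; rewrite mulr0.
have -> : \sum_(i < n.-1) crd g i * (if (i.+1 == j'.+1)%N then 1 else 0) =
          \sum_(i < n.-1) (if (i:nat) == j' then crd g i else 0).
  by apply: eq_bigr => i _; rewrite eqSS; case: eqP; rewrite ?mulr1 ?mulr0.
by rewrite sum_delta; move: hj; rewrite /= !ltnS => ->.
Qed.

Lemma crd_gen (j : 'I_n) k : crd (gen l j) k =
  if (k < n.-1)%N then (if (j < n.-1)%N then ((k == j : bool) : nat)%:R else -1) else 0.
Proof.
rewrite /crd /gen; case: insubP => [k' hk <-|hk] /=; last by move/negbTE: hk => /= ->.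
by rewrite (ltn_ord k'); case: ifP => _; rewrite ffunE.
Qed.

End Exps.

Section Exps2.
Variables (m l : nat).
Local Notation n := m.+3.
Local Notation GG := (G n l).

Lemma natbR (b : bool) : ((b : nat)%:R : 'Z_l) = if b then 1 else 0.
Proof. by case: b. Qed.

Lemma ordS_val (i : 'I_n) : ((ordS i : nat) = if (i < n.-1)%N then i.+1 else 0)%N.
Proof.
rewrite /=; case: ifP => h; first by rewrite modn_small.
have -> : (i : nat) = m.+2 by have := ltn_ord i; move: h => /= h; lia.
by rewrite modnn.
Qed.

Lemma Ex_gen (i k : 'I_n) :
  Ex (gen l i) k = ((k == i : bool) : nat)%:R - ((k == ordS i : bool) : nat)%:R.
Proof.
rewrite /Ex !crd_gen -[k == ordS i]/((k:nat) == ordS i) ordS_val -[k == i]/((k:nat) == i).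
case: k => [[|k] hk] /=; case: i => [i hi] /=; rewrite ?crd_gen /= ?natbR;
 repeat case: ifP => ? /=; first [by exfalso; lia | ring | idtac].
Qed.

Lemma Bx_gen_r (g : GG) (j : 'I_n) : (j < n.-1)%N ->
  Bx g (gen l j) = if (j:nat) is j'.+1 then crd g j' else 0.
Proof.
move=> /= hj; rewrite /Bx.
have E : forall k : 'I_n.-2,
    crd g k * crd (gen l j) k.+1 = if (k.+1 == j)%N then crd g k else 0.
  move=> k; rewrite crd_gen /= ltnS (ltn_ord k) hj natbR.
  by case: ifP; rewrite ?mulr1 ?mulr0.
under eq_bigr do rewrite E.
case: (nat_of_ord j) hj => [|j'] /= hj; first by rewrite big1.
under eq_bigr do rewrite eqSS.
by rewrite sum_delta -ltnS hj.
Qed.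

Lemma Bx_gen_l (g : GG) (j : 'I_n) : (j < n.-1)%N -> Bx (gen l j) g = crd g j.+1.
Proof.
move=> /= hj; rewrite /Bx.
have E : forall k : 'I_n.-2,
    crd (gen l j) k * crd g k.+1 = if ((k:nat) == j)%N then crd g j.+1 else 0.
  move=> k; have hk : (k < m.+2)%N by have := ltn_ord k; rewrite /=; lia.
  rewrite crd_gen /= hk hj natbR.
  by case: eqP => [->|]; rewrite ?mul1r ?mul0r.
under eq_bigr do rewrite E.
rewrite (sum_delta (fun _ => crd g j.+1)); case: ifP => // h; rewrite crd_out //.
by move: h => /= h; lia.
Qed.

Lemma Bx_gen_r' (g : GG) (j : 'I_n) : (j : nat) = n.-1 ->
  Bx g (gen l j) = - \sum_(k < n.-2) crd g k.
Proof.
move=> hj; rewrite /Bx -sumrN; apply: eq_bigr => k _.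
by rewrite crd_gen /= hj ltnS (ltn_ord k) ltnn mulrN1.
Qed.

Lemma Bx_gen_l' (g : GG) (j : 'I_n) : (j : nat) = n.-1 ->
  Bx (gen l j) g = - \sum_(k < n.-2) crd g k.+1.
Proof.
move=> hj; rewrite /Bx -sumrN; apply: eq_bigr => k _.
have hk : (k < m.+2)%N by have := ltn_ord k; rewrite /=; lia.
by rewrite crd_gen /= hj hk ltnn mulN1r.
Qed.

Lemma Bcomm (g : GG) (j : 'I_n) :
  - Bx g (gen l j) - Yx g (ey (ordS j)) = Ex g j - Bx (gen l j) g.
Proof.
rewrite YxA /Ex ordS_val.
have [hj|hj] : (j < n.-1)%N \/ (j:nat) = n.-1 by have := ltn_ord j; lia.
  rewrite hj Bx_gen_r // Bx_gen_l //.
  case: (nat_of_ord j) => [|j']; rewrite /=; ring.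
rewrite hj ltnn Bx_gen_r' // Bx_gen_l' //= (@crd_out _ _ g m.+2) //.
rewrite big_ord_recl [in RHS]big_ord_recr /=.
rewrite /bump /=; under eq_bigr do rewrite add1n.
ring.
Qed.

End Exps2.

Section TAlg.
Variables (C : numClosedFieldType) (m l : nat) (zeta : C) (t : 'I_(m.+3) -> C).
Hypothesis hl : (1 < l)%N.
Hypothesis hz : l.-primitive_root zeta.
Local Notation n := m.+3.
Local Notation GG := (G n l).
Local Notation TT := (T C n l).
Local Notation SS := (S C n l).
Local Notation zp := (@zpow C l zeta).
Local Notation M := (@mulT C n l zeta).
Local Notation al := (@alpha C n l zeta).
Local Notation ya := (@yact C n l zeta).
Local Notation ei := (@eig C n l zeta).

Lemma alphaE g h : al g h = zp (- Bx g h). Proof. by []. Qed.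
Lemma yactE g p : ya g p = zp (Yx g p). Proof. by []. Qed.
Lemma eigE g j : ei g j = zp (Ex g j). Proof. by []. Qed.

Lemma alpha0l h : al 0 h = 1. Proof. by rewrite alphaE Bx0l oppr0 (zpow0 l zeta). Qed.
Lemma alpha0r h : al h 0 = 1. Proof. by rewrite alphaE Bx0r oppr0 (zpow0 l zeta). Qed.
Lemma yact0l p : ya 0 p = 1. Proof. by rewrite yactE Yx0l (zpow0 l zeta). Qed.
Lemma yact0r g : ya g 0 = 1. Proof. by rewrite yactE Yx0r (zpow0 l zeta). Qed.
Lemma yactDl g h p : ya (g + h) p = ya g p * ya h p.
Proof. by rewrite !yactE YxDl (zpowD hl hz). Qed.
Lemma yactDr g p q : ya g (p + q) = ya g p * ya g q.
Proof. by rewrite !yactE YxDr (zpowD hl hz). Qed.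
Lemma alpha_cocycle g h k : al g h * al (g + h) k = al h k * al g (h + k).
Proof.
rewrite !alphaE -!(zpowD hl hz) BxDl BxDr; congr (zp _); ring.
Qed.
Lemma yact_ey g (j : 'I_n) : ya g (ey j) = ei g j.
Proof. by rewrite yactE YxA. Qed.
Lemma comm_coef g (j : 'I_n) :
  al g (gen l j) * ya g (- ey (ordS j)) = ei g j * al (gen l j) g.
Proof.
rewrite alphaE yactE eigE alphaE YxN -!(zpowD hl hz) -Bcomm; congr (zp _); ring.
Qed.

Lemma lin_mulT (a b : TT) F : lin (M a b) F =
  lin a (fun kx => lin b (fun ky => al kx.2 ky.2 * ya kx.2 ky.1 * F (kx.1 + ky.1, kx.2 + ky.2))).
Proof.
rewrite /mulT lin_allpairs /lin; apply: eq_bigr => x _; rewrite mulr_sumr.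
by apply: eq_bigr => y _ /=; ring.
Qed.
Lemma lin_scaleT c (a : TT) F : lin (scaleT c a) F = c * lin a F.
Proof. by rewrite /scaleT lin_map /lin mulr_sumr; apply: eq_bigr => x _ /=; ring. Qed.
Lemma mulT_congrl (a a' b : TT) F : leqv a a' -> lin (M a b) F = lin (M a' b) F.
Proof. by move=> e; rewrite !lin_mulT e. Qed.
Lemma mulT_congrr (a b b' : TT) F : leqv b b' -> lin (M a b) F = lin (M a b') F.
Proof. by move=> e; rewrite !lin_mulT; apply: lin_ext => kx; rewrite e. Qed.
Lemma mulTA (a b c : TT) F : lin (M (M a b) c) F = lin (M a (M b c)) F.
Proof.
rewrite !lin_mulT; apply: lin_ext => kx; rewrite lin_mulT; apply: lin_ext => ky.
rewrite -linZ; apply: lin_ext => kz /=.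
rewrite !addrA yactDl yactDr.
have := alpha_cocycle kx.2 ky.2 kz.2 => e.
transitivity ((al kx.2 ky.2 * al (kx.2 + ky.2) kz.2) * ya kx.2 ky.1 * ya kx.2 kz.1 * ya ky.2 kz.1 *
  F (kx.1 + ky.1 + kz.1, kx.2 + ky.2 + kz.2)); first by ring.
rewrite e; ring.
Qed.
Lemma lin_mulTZl c (a b : TT) F : lin (M (scaleT c a) b) F = c * lin (M a b) F.
Proof. by rewrite !lin_mulT lin_scaleT. Qed.
Lemma lin_mulTZr c (a b : TT) F : lin (M a (scaleT c b)) F = c * lin (M a b) F.
Proof.
rewrite !lin_mulT -linZ; apply: lin_ext => kx; rewrite lin_scaleT -!linZ.
by apply: lin_ext => ky; ring.
Qed.
Lemma lin_gT g F : lin (gT C g : TT) F = F (0, g).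
Proof. by rewrite /lin big_cons big_nil /= mul1r addr0. Qed.
Lemma lin_thetaX (j : 'I_n) F : lin (thetaX l zeta t j) F =
  F (ey j, 0) - zeta * t j / (zeta - 1) * F (- ey (ordS j), gen l j).
Proof. by rewrite /lin !big_cons big_nil /=; ring. Qed.

Lemma comm_gX g (j : 'I_n) F :
  lin (M (gT C g) (thetaX l zeta t j)) F = ei g j * lin (M (thetaX l zeta t j) (gT C g)) F.
Proof.
rewrite !lin_mulT lin_gT !lin_thetaX /= !lin_gT /=.
rewrite !alpha0l !alpha0r !yact0l !yact0r !add0r !addr0 yact_ey.
rewrite [gen l j + g]addrC.
have := comm_coef g j => e.
transitivity (ei g j * F (ey j, g) -
  zeta * t j / (zeta - 1) * (al g (gen l j) * ya g (- ey (ordS j))) * F (- ey (ordS j), g + gen l j)); first by ring.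
rewrite e; ring.
Qed.


Definition ThetaK (k : SKey n l) : TT :=
  foldr (fun i acc => M (thetaX l zeta t i) acc) (gT C k.2) k.1.
Definition Theta (a : SS) : TT := flatten [seq scaleT x.1 (ThetaK x.2) | x <- a].

Lemma ThetaK_cons j w h : ThetaK (j :: w, h) = M (thetaX l zeta t j) (ThetaK (w, h)).
Proof. by []. Qed.
Lemma ThetaK_nil h : ThetaK ([::], h) = gT C h.
Proof. by []. Qed.

Lemma lin_Theta a F : lin (Theta a) F = lin a (fun k => lin (ThetaK k) F).
Proof.
rewrite /Theta lin_flatten.
transitivity (\sum_(x <- a) x.1 * lin (ThetaK x.2) F); last by [].
by apply: eq_bigr => x _; rewrite lin_scaleT.
Qed.

Lemma leqv_comm g (j : 'I_n) :
  leqv (M (gT C g) (thetaX l zeta t j)) (scaleT (ei g j) (M (thetaX l zeta t j) (gT C g))).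
Proof. by move=> G; rewrite lin_scaleT comm_gX. Qed.

Lemma gT_mul (g h : GG) w F :
  lin (M (gT C g) (ThetaK (w, h))) F = al g h * chi zeta g w * lin (ThetaK (w, g + h)) F.
Proof.
elim: w F => [|j w IH] F.
  by rewrite !ThetaK_nil lin_mulT !lin_gT /= add0r yact0r /chi big_nil; ring.
rewrite !ThetaK_cons -mulTA (mulT_congrl _ _ (leqv_comm g j)) lin_mulTZl mulTA.
have e : leqv (M (gT C g) (ThetaK (w, h))) (scaleT (al g h * chi zeta g w) (ThetaK (w, g + h))).
  by move=> G; rewrite lin_scaleT IH.
rewrite (mulT_congrr _ _ e) lin_mulTZr /chi big_cons; ring.
Qed.

Lemma ThetaK_mul (w w' : seq 'I_n) (g h : GG) F :
  lin (M (ThetaK (w, g)) (ThetaK (w', h))) F =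
  al g h * chi zeta g w' * lin (ThetaK (w ++ w', g + h)) F.
Proof.
elim: w F => [|i w IH] F; first by rewrite ThetaK_nil gT_mul.
rewrite ThetaK_cons mulTA.
have e : leqv (M (ThetaK (w, g)) (ThetaK (w', h)))
              (scaleT (al g h * chi zeta g w') (ThetaK (w ++ w', g + h))).
  by move=> G; rewrite lin_scaleT IH.
by rewrite (mulT_congrr _ _ e) lin_mulTZr cat_cons ThetaK_cons.
Qed.

Lemma lin_mulS (a b : SS) H : lin (mulS zeta a b) H =
  lin a (fun ka => lin b (fun kb => al ka.2 kb.2 * chi zeta ka.2 kb.1 * H (ka.1 ++ kb.1, ka.2 + kb.2))).
Proof.
rewrite /mulS lin_allpairs /lin; apply: eq_bigr => x _; rewrite mulr_sumr.
by apply: eq_bigr => y _ /=; ring.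
Qed.

Lemma Theta_mul a b F : lin (Theta (mulS zeta a b)) F = lin (M (Theta a) (Theta b)) F.
Proof.
rewrite lin_Theta lin_mulS lin_mulT lin_Theta; apply: lin_ext => ka /=.
under [in RHS]lin_ext => kx do rewrite lin_Theta.
rewrite lin_exch; apply: lin_ext => kb /=.
rewrite -lin_mulT; move: ka kb => [w g] [w' h].
by rewrite ThetaK_mul.
Qed.

Lemma Theta_cat a b : Theta (a ++ b) = Theta a ++ Theta b.
Proof. by rewrite /Theta map_cat flatten_cat. Qed.
Lemma Theta_scale c a F : lin (Theta (scaleS c a)) F = lin (scaleT c (Theta a)) F.
Proof.
rewrite lin_scaleT !lin_Theta /scaleS lin_map /lin mulr_sumr.
by apply: eq_bigr => x _ /=; ring.
Qed.
Lemma Theta_xS i F : lin (Theta (xS C l i)) F = lin (thetaX l zeta t i) F.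
Proof.
rewrite lin_Theta {1}/lin big_cons big_nil /= addr0 mul1r.
rewrite ThetaK_cons ThetaK_nil lin_mulT.
by apply: lin_ext => -[p g]; rewrite lin_gT /= alpha0r yact0r !addr0 !mul1r.
Qed.
Lemma Theta_gS g F : lin (Theta (gS C g)) F = lin (gT C g) F.
Proof. by rewrite lin_Theta {1}/lin big_cons big_nil /= addr0 mul1r. Qed.
Lemma Theta_one F : lin (Theta (oneS C n l)) F = lin (oneT C n l) F.
Proof. by rewrite lin_Theta {1}/lin big_cons big_nil /= addr0 mul1r. Qed.


Local Notation cc k := (zeta * t k / (zeta - 1)).
Local Notation X i := (thetaX l zeta t i).

Lemma XX_expand (i j : 'I_n) F : lin (M (X i) (X j)) F =
  F (ey i + ey j, 0) - cc j * F (ey i - ey (ordS j), gen l j)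
  - cc i * ya (gen l i) (ey j) * F (- ey (ordS i) + ey j, gen l i)
  + cc i * cc j * (al (gen l i) (gen l j) * ya (gen l i) (- ey (ordS j))) *
      F (- ey (ordS i) - ey (ordS j), gen l i + gen l j).
Proof.
rewrite lin_mulT lin_thetaX /= !lin_thetaX /= !alpha0l !alpha0r !yact0l !addr0 !add0r.
ring.
Qed.

Lemma Theta_xx i j F : lin (Theta (mulS zeta (xS C l i) (xS C l j))) F = lin (M (X i) (X j)) F.
Proof. by rewrite Theta_mul (mulT_congrl _ _ (Theta_xS i)) (mulT_congrr _ _ (Theta_xS j)). Qed.

Lemma zpowm1 : zp (-1) = zeta^-1.
Proof.
apply: (mulIf (zeta_neq0 hl hz)); rewrite mulVf ?(zeta_neq0 hl hz) //.
by rewrite -{2}(zpow1 l zeta) -(zpowD hl hz) addNr (zpow0 l zeta).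
Qed.

Lemma ordS_neq (i : 'I_n) : (ordS i == i) = false.
Proof.
apply/negbTE/eqP => e; have h1 := ordS_val i; have h3 := ltn_ord i.
have e' : ((ordS i : nat) = i) by rewrite e.
by move: h1 e'; case: ifP => /= ? ? ?; lia.
Qed.
Lemma ordS2_neq (i : 'I_n) : (i == ordS (ordS i)) = false.
Proof.
apply/negbTE/eqP => e.
have h1 := ordS_val i; have h2 := ordS_val (ordS i); have h3 := ltn_ord i.
have e' : (i:nat) = ordS (ordS i) by rewrite {1}e.
by move: h1 h2 e'; case: ifP => /= ? ?; case: ifP => /= ? ? ?; lia.
Qed.
Lemma ordS_neq' (i : 'I_n) : (i == ordS i) = false.
Proof. by rewrite eq_sym ordS_neq. Qed.
Lemma ordS_inj (i j : 'I_n) : (ordS i == ordS j) = (i == j).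
Proof.
apply/eqP/eqP => [e|->] //; apply: val_inj => /=.
have h1 := ordS_val i; have h2 := ordS_val j; have h3 := ltn_ord i; have h4 := ltn_ord j.
have e' : (ordS i : nat) = ordS j by rewrite e.
by move: h1 h2 e'; case: ifP => /= ? ?; case: ifP => /= ? ? ?; lia.
Qed.

Lemma rel_lin1 (A B : SS) c g F :
  lin (Theta (A ++ scaleS (-1) B ++ scaleS c (gS C g))) F =
  lin (Theta A) F - lin (Theta B) F + c * F (0, g).
Proof.
by rewrite 2!Theta_cat 2!lin_cat 2!Theta_scale 2!lin_scaleT Theta_gS lin_gT; ring.
Qed.
Lemma rel_lin2 (A B : SS) F :
  lin (Theta (A ++ scaleS (-1) B)) F = lin (Theta A) F - lin (Theta B) F.
Proof. by rewrite Theta_cat lin_cat Theta_scale lin_scaleT; ring. Qed.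

Lemma rel1_zero (i : 'I_n) F : lin (Theta (mulS zeta (xS C l i) (xS C l (ordS i)) ++
   scaleS (-1) (mulS zeta (xS C l (ordS i)) (xS C l i)) ++ scaleS (- t i) (gS C (gen l i)))) F = 0.
Proof.
rewrite rel_lin1 !Theta_xx !XX_expand.
rewrite [al (gen l i) _ * _]comm_coef.
rewrite !yactE !YxN !YxA !eigE !Ex_gen !natbR.
rewrite !eqxx ordS_inj ordS_neq ordS_neq' ordS2_neq.
rewrite !subr0 !sub0r ?subrr ?oppr0 (zpow0 l zeta) zpowm1 addNr.
rewrite [ey (ordS i) + ey i]addrC [- ey (ordS (ordS i)) + ey i]addrC.
rewrite [- ey (ordS (ordS i)) - ey (ordS i)]addrC [gen l (ordS i) + gen l i]addrC.
have z0 := zeta_neq0 hl hz; have z1 : zeta - 1 != 0 by rewrite subr_eq0 (zeta_neq1 hl hz).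
by field; rewrite z0 z1.
Qed.


Lemma rel2_zero (i j : 'I_n) F : (i == j) = false -> (j == ordS i) = false ->
  (i == ordS j) = false ->
  lin (Theta (mulS zeta (xS C l i) (xS C l j) ++ scaleS (-1) (mulS zeta (xS C l j) (xS C l i)))) F = 0.
Proof.
move=> hij h1 h2.
have hji : (j == i) = false by rewrite eq_sym.
have h1' : (ordS i == j) = false by rewrite eq_sym.
have h2' : (ordS j == i) = false by rewrite eq_sym.
have h3 : (ordS i == ordS j) = false by rewrite ordS_inj.
rewrite rel_lin2 !Theta_xx !XX_expand.
rewrite [al (gen l i) _ * _]comm_coef.
rewrite !yactE !YxN !YxA !eigE !Ex_gen !natbR.
rewrite ?hij ?hji ?h1 ?h1' ?h2 ?h2' ?h3 !subrr ?oppr0 (zpow0 l zeta).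
rewrite [ey j + ey i]addrC [- ey (ordS j) + ey i]addrC [- ey (ordS i) + ey j]addrC.
rewrite [- ey (ordS j) - ey (ordS i)]addrC [gen l j + gen l i]addrC.
ring.
Qed.

Lemma Theta_rels r : r \in rels l zeta t -> forall F, lin (Theta r) F = 0.
Proof.
rewrite /rels mem_cat => /orP [/mapP [i _ ->]|/mapP [p hp ->]] F.
  exact: rel1_zero.
move: hp; rewrite mem_enum => /andP [d1 dn1].
case: p d1 dn1 => i j d1 dn1; rewrite /= in d1 dn1.
case: (eqVneq i j) => [->|hij]; first by rewrite rel_lin2 subrr.
have hi := ltn_ord i; have hj := ltn_ord j.
apply: rel2_zero; first exact: negbTE.
  apply/negbTE/eqP => e; have := ordS_val i; rewrite -e /=.
  by case: ifP => /= ? ?; move: d1 dn1; rewrite /=; lia.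
apply/negbTE/eqP => e; have := ordS_val j; rewrite -e /=.
by case: ifP => /= ? ?; move: d1 dn1; rewrite /=; lia.
Qed.

Lemma Theta_ideal a : inIdeal zeta t a -> forall F, lin (Theta a) F = 0.
Proof.
move=> [s [hs e]] F.
rewrite lin_Theta; move/leqvP: e => ->.
rewrite lin_flatten big_seq big1 // => x xs.
rewrite -lin_Theta Theta_mul (mulT_congrl _ _ (Theta_mul _ _)).
have e : leqv (M (Theta x.1.1) (Theta x.1.2)) (M (Theta x.1.1) [::]).
  by move=> G; apply: mulT_congrr => H; rewrite (Theta_rels (hs x xs)) lin_nil.
rewrite (mulT_congrl _ _ e) lin_mulT lin_mulT -[RHS](lin0 (Theta x.1.1)).
by apply: lin_ext => kx; rewrite lin_nil.
Qed.


Definition deg (p : Zn n) : int := \sum_i p i.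
Definition mult (w : seq 'I_n) : Zn n := \sum_(i <- w) ey i.

Lemma degD p q : deg (p + q) = deg p + deg q.
Proof. by rewrite /deg -big_split; apply: eq_bigr => i _; rewrite ffunE. Qed.
Lemma degN p : deg (- p) = - deg p.
Proof. by rewrite /deg -sumrN; apply: eq_bigr => i _; rewrite ffunE. Qed.
Lemma deg_ey (i : 'I_n) : deg (ey i) = 1.
Proof.
rewrite /deg (bigD1 i) //= big1 => [|j hj]; first by rewrite ffunE eqxx addr0.
by rewrite ffunE (negbTE hj).
Qed.
Lemma mult_cons i w : mult (i :: w) = ey i + mult w.
Proof. by rewrite /mult big_cons. Qed.
Lemma deg_mult w : deg (mult w) = (size w)%:Z.
Proof.
elim: w => [|i w IH]; first by rewrite /mult big_nil /deg big1 // => j _; rewrite ffunE.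
by rewrite mult_cons degD IH deg_ey /=; lia.
Qed.
Lemma mult_count w (k : 'I_n) : mult w k = (count_mem k w)%:Z.
Proof.
elim: w => [|i w IH]; first by rewrite /mult big_nil ffunE.
by rewrite mult_cons ffunE IH ffunE /= PoszD eq_sym.
Qed.

Lemma ThetaK_lead w g : exists R : TT,
  (forall x, x \in R -> deg x.2.1 < (size w)%:Z) /\
  forall F, lin (ThetaK (w, g)) F = F (mult w, g) + lin R F.
Proof.
elim: w => [|i w [R' [hR' IH]]].
  exists [::]; split=> // F; by rewrite ThetaK_nil lin_gT lin_nil addr0 /mult big_nil.
pose f1 := fun x : C * TKey n l => (x.1, (ey i + x.2.1, x.2.2)).
pose f2 := fun x : C * TKey n l => (- (zeta * t i / (zeta - 1)) * x.1 *
   al (gen l i) x.2.2 * ya (gen l i) x.2.1, (- ey (ordS i) + x.2.1, gen l i + x.2.2)).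
exists (map f1 R' ++ map f2 ((1, (mult w, g)) :: R')); split.
  move=> x; rewrite mem_cat => /orP [/mapP [y yR ->]|/mapP [y yR ->]] /=.
    by rewrite degD deg_ey /= addrC -[(size w).+1]addn1 PoszD ltrD2r hR'.
  rewrite degD degN deg_ey.
  have : deg y.2.1 <= (size w)%:Z.
    move: yR; rewrite inE => /orP [/eqP -> /=|/hR' h]; first by rewrite deg_mult.
    exact: ltW.
  move=> h /=; rewrite addrC -[(size w).+1]addn1 PoszD -subr_gt0.
  have -> : (size w)%:Z + 1 - (deg y.2.1 + -1) = ((size w)%:Z - deg y.2.1) + 2 by ring.
  by apply: ltr_wpDl; rewrite ?subr_ge0.
move=> F; rewrite ThetaK_cons lin_mulT lin_thetaX !IH lin_cat !lin_map.
rewrite alpha0l yact0l add0r !mul1r big_cons mult_cons.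
have e1 : lin R' (fun ky => al 0 ky.2 * ya 0 ky.1 * F (ey i + ky.1, 0 + ky.2)) =
          \sum_(x <- R') (f1 x).1 * F (f1 x).2.
  by apply: eq_bigr => x _; rewrite alpha0l yact0l add0r !mul1r.
have e2 : - (zeta * t i / (zeta - 1)) * lin R' (fun ky =>
      al (gen l i) ky.2 * ya (gen l i) ky.1 * F (- ey (ordS i) + ky.1, gen l i + ky.2)) =
     \sum_(x <- R') (f2 x).1 * F (f2 x).2.
  by rewrite /lin mulr_sumr; apply: eq_bigr => x _ /=; ring.
rewrite e1 -e2 /=; ring.
Qed.


Definition sortedw (w : seq 'I_n) := sorted (fun a b : 'I_n => (a <= b)%N) w.

Lemma mult_inj w w0 : sortedw w -> sortedw w0 -> mult w = mult w0 -> w = w0.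
Proof.
move=> s1 s2 e; apply: (sorted_eq (leT := fun a b : 'I_n => (a <= b)%N)) => //.
- by move=> a b c; apply: leq_trans.
- by move=> a b h; apply: val_inj; apply: anti_leq.
apply/allP => x _; apply/eqP.
by have := congr1 (fun p : Zn n => p x) e; rewrite /= !mult_count => -[].
Qed.

Lemma lead_ind w g w0 g0 : sortedw w -> sortedw w0 -> (size w <= size w0)%N ->
  lin (ThetaK (w, g)) (fun k => ((k == (mult w0, g0)) : nat)%:R) =
  (((w, g) == (w0, g0)) : nat)%:R.
Proof.
move=> sw sw0 hsz; have [R [hR e]] := ThetaK_lead w g; rewrite e.
have -> : lin R (fun k => ((k == (mult w0, g0)) : nat)%:R) = 0.
  rewrite /lin big_seq big1 // => x xR.
  have -> : (x.2 == (mult w0, g0)) = false.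
    apply/negbTE/eqP => ex; have := hR x xR; rewrite ex /= deg_mult; lia.
  by rewrite mulr0.
rewrite addr0; congr (_%:R); congr nat_of_bool.
apply/eqP/eqP => [[e1 e2]|[-> ->]] //.
by rewrite -e2 (mult_inj sw sw0 e1).
Qed.

Lemma exists_max (L : seq (SKey n l)) : L != [::] ->
  exists k0, k0 \in L /\ forall k, k \in L -> (size k.1 <= size k0.1)%N.
Proof.
elim: L => // k L IH _; case: L IH => [|k' L] IH.
  by exists k; split; [rewrite mem_head | move=> k2; rewrite inE => /eqP ->].
have [k1 [h1 h2]] := IH isT.
case: (leqP (size k.1) (size k1.1)) => h.
  exists k1; split; first by rewrite inE h1 orbT.
  by move=> k2; rewrite inE => /orP [/eqP ->|/h2].
exists k; split; first by rewrite mem_head.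
move=> k2; rewrite inE => /orP [/eqP ->//|/h2 h']; exact: (leq_trans h' (ltnW h)).
Qed.

Lemma indep (a : SS) : (forall x, x \in a -> sortedw x.2.1) ->
  (forall F, lin (Theta a) F = 0) -> forall k, coef a k = 0.
Proof.
move=> hs h0.
set U := undup (map snd a).
have uU : uniq U := undup_uniq _.
have aU : forall x, x \in a -> x.2 \in U by move=> x xa; rewrite mem_undup map_f.
have sU : forall k, k \in U -> sortedw k.1.
  by move=> k; rewrite mem_undup => /mapP [x xa ->]; apply: hs.
pose L := [seq k <- U | coef a k != 0].
case: (eqVneq L [::]) => hL.
  move=> k; case: (boolP (k \in U)) => kU.
    have : k \notin L by rewrite hL.
    by rewrite mem_filter kU andbT negbK => /eqP.
  rewrite /coef big_seq_cond big1 //= => x /andP [xa /eqP ex].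
  by case/negP: kU; rewrite -ex aU.
exfalso.
have [k0 [k0L hmax]] := exists_max hL.
move: (k0L); rewrite mem_filter => /andP [hk0 k0U].
have := h0 (fun k => ((k == (mult k0.1, k0.2)) : nat)%:R).
rewrite lin_Theta (lin_coef _ uU aU).
have -> : \sum_(k <- U) coef a k * lin (ThetaK k)
            (fun k1 => ((k1 == (mult k0.1, k0.2)) : nat)%:R) =
          \sum_(k <- U) coef a k * ((k == k0) : nat)%:R.
  rewrite big_seq [RHS]big_seq; apply: eq_bigr => k kU.
  case: (eqVneq (coef a k) 0) => [->|hk]; first by rewrite !mul0r.
  have kL : k \in L by rewrite mem_filter hk kU.
  have hsz := hmax k kL; have sw := sU k kU; have sw0 := sU k0 k0U.
  move: hsz sw sw0; case: k {kU kL hk} => w g.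
  by case: k0 {k0L hk0 k0U hmax} => w0 g0 /= hsz sw sw0; rewrite lead_ind.
rewrite -(lin_coef _ uU aU) -coef_lin => /eqP; by rewrite (negbTE hk0).
Qed.


Definition idl (s : seq (SS * SS * SS)) : SS :=
  flatten [seq mulS zeta (mulS zeta x.1.1 x.1.2) x.2 | x <- s].
Definition NF (a : SS) := exists a' s, (forall x, x \in a' -> sortedw x.2.1) /\
  (forall x, x \in s -> x.1.2 \in rels l zeta t) /\ leqv a (a' ++ idl s).

Lemma idl_cat s1 s2 : idl (s1 ++ s2) = idl s1 ++ idl s2.
Proof. by rewrite /idl map_cat flatten_cat. Qed.

Lemma NF_cat a b : NF a -> NF b -> NF (a ++ b).
Proof.
move=> [a1 [s1 [h1 [h1' e1]]]] [a2 [s2 [h2 [h2' e2]]]].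
exists (a1 ++ a2), (s1 ++ s2); split.
  by move=> x; rewrite mem_cat => /orP [/h1|/h2].
split; first by move=> x; rewrite mem_cat => /orP [/h1'|/h2'].
by move=> F; rewrite lin_cat e1 e2 idl_cat !lin_cat; ring.
Qed.
Lemma NF_nil : NF [::].
Proof. by exists [::], [::]; split=> //; split. Qed.
Lemma NF_sorted w c g : sortedw w -> NF [:: (c, (w, g))].
Proof.
move=> sw; exists [:: (c, (w, g))], [::]; split; first by move=> x; rewrite inE => /eqP ->.
by split=> // F; rewrite /idl /= cats0.
Qed.

Lemma NF_combine k L1 L2 U R V : NF L1 -> NF L2 -> R \in rels l zeta t ->
  (forall F, lin [:: k] F = lin L1 F + lin L2 F + lin (mulS zeta (mulS zeta U R) V) F) ->
  NF [:: k].
Proof.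
move=> [a1 [s1 [h1 [h1' e1]]]] [a2 [s2 [h2 [h2' e2]]]] hR e.
exists (a1 ++ a2), (s1 ++ s2 ++ [:: (U, R, V)]); split.
  by move=> x; rewrite mem_cat => /orP [/h1|/h2].
split.
  move=> x; rewrite mem_cat => /orP [/h1'//|].
  rewrite mem_cat => /orP [/h2'//|].
  by rewrite inE => /eqP ->.
move=> F; rewrite e e1 e2 !idl_cat !lin_cat /= lin_nil; ring.
Qed.

Lemma lin_scaleS c (a : SS) F : lin (scaleS c a) F = c * lin a F.
Proof. by rewrite /scaleS lin_map /lin mulr_sumr; apply: eq_bigr => x _ /=; ring. Qed.

Lemma lin_xS (i : 'I_n) (G : SKey n l -> C) : lin (xS C l i) G = G ([:: i], 0).
Proof. by rewrite /lin big_cons big_nil /= mul1r addr0. Qed.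
Lemma lin_gS (h : GG) (G : SKey n l -> C) : lin (gS C h) G = G ([::], h).
Proof. by rewrite /lin big_cons big_nil /= mul1r addr0. Qed.
Lemma lin1 (c : C) (k : SKey n l) G : lin [:: (c, k)] G = c * G k.
Proof. by rewrite /lin big_cons big_nil /= addr0. Qed.

Lemma chi0 (w : seq 'I_n) : chi zeta (0 : GG) w = 1.
Proof.
rewrite /chi big1 // => j _; rewrite eigE /Ex crd0.
by case: (nat_of_ord j) => [|j']; rewrite ?crd0 subr0 (zpow0 l zeta).
Qed.

Lemma sandwich3 (d : C) u v g (p q : 'I_n) e h F :
  lin (mulS zeta (mulS zeta [:: (d, (u, 0))]
     (mulS zeta (xS C l p) (xS C l q) ++ scaleS (-1) (mulS zeta (xS C l q) (xS C l p))
       ++ scaleS e (gS C h))) [:: (1, (v, g))]) F =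
  d * F (u ++ p :: q :: v, g) - d * F (u ++ q :: p :: v, g) +
  d * e * al h g * chi zeta h v * F (u ++ v, h + g).
Proof.
rewrite lin_mulS lin_mulS lin1 !lin_cat !lin_scaleS !lin_mulS !lin_xS !lin_gS /=.
rewrite ?lin_xS ?lin1 ?lin_nil /= ?lin1 ?lin_nil /=.
rewrite !addr0 !add0r !alpha0l !chi0 -!catA /= ?cats0.
ring.
Qed.

Lemma sandwich2 (d : C) u v g (p q : 'I_n) F :
  lin (mulS zeta (mulS zeta [:: (d, (u, 0))]
     (mulS zeta (xS C l p) (xS C l q) ++ scaleS (-1) (mulS zeta (xS C l q) (xS C l p))))
     [:: (1, (v, g))]) F =
  d * F (u ++ p :: q :: v, g) - d * F (u ++ q :: p :: v, g).
Proof.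
rewrite lin_mulS lin_mulS lin1 !lin_cat !lin_scaleS !lin_mulS !lin_xS /=.
rewrite ?lin_xS ?lin1 ?lin_nil /= ?lin1 ?lin_nil /=.
rewrite !addr0 !add0r !alpha0l !chi0 -!catA /= ?cats0.
ring.
Qed.


Fixpoint inv (w : seq 'I_n) : nat :=
  if w is x :: w' then (count (fun y : 'I_n => (y < x)%N) w' + inv w')%N else 0%N.

Lemma inv_swap u (a b : 'I_n) v : (b < a)%N ->
  inv (u ++ a :: b :: v) = (inv (u ++ b :: a :: v)).+1.
Proof.
move=> h; elim: u => [|x u IH] /=.
  rewrite h (_ : (a < b)%N = false); last by rewrite ltnNge ltnW.
  rewrite /=; lia.
rewrite IH !count_cat /=; lia.
Qed.

Lemma descent (w : seq 'I_n) : ~~ sortedw w ->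
  exists u a b v, w = u ++ a :: b :: v /\ (b < a)%N.
Proof.
elim: w => [|x w IH] //; case: w IH => [|y w] IH //.
rewrite /sortedw /=; case: (leqP x y) => hxy /= hp.
  have [u [a [b [v [e h]]]]] := IH hp.
  by exists (x :: u), a, b, v; rewrite e.
by exists [::], x, y, w.
Qed.

Lemma NF_step u (a b : 'I_n) v c g :
  (b < a)%N -> NF [:: (c, (u ++ b :: a :: v, g))] ->
  (forall c' g', NF [:: (c', (u ++ v, g'))]) ->
  NF [:: (c, (u ++ a :: b :: v, g))].
Proof.
move=> hba h1 h2.
have ha := ltn_ord a; have hb := ltn_ord b.
have inR1 : forall i : 'I_n, mulS zeta (xS C l i) (xS C l (ordS i)) ++
      scaleS (-1) (mulS zeta (xS C l (ordS i)) (xS C l i)) ++ scaleS (- t i) (gS C (gen l i))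
      \in rels l zeta t.
  by move=> i; rewrite /rels mem_cat; apply/orP; left; apply/mapP; exists i; rewrite ?mem_enum.
case: (eqVneq (a:nat) b.+1) => [ea|nea].
  have eS : ordS b = a.
    apply: ord_inj; rewrite ordS_val ea; case: ifP => //= h; exfalso; move: h; rewrite /=; lia.
  apply: (NF_combine (L1 := [:: (c, (u ++ b :: a :: v, g))])
    (L2 := [:: (- (c * t b * al (gen l b) g * chi zeta (gen l b) v), (u ++ v, gen l b + g))])
    (U := [:: (-c, (u, 0))]) (V := [:: (1, (v, g))]) h1 (h2 _ _) (inR1 b)).
  by move=> F; rewrite sandwich3 eS !lin1; ring.
case: (boolP (((b:nat) == 0%N) && ((a:nat) == n.-1))) => [/andP [/eqP eb /eqP ea]|hab].
  have eS : ordS a = b.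
    apply: ord_inj; rewrite ordS_val eb ea /=; by rewrite ltnn.
  apply: (NF_combine (L1 := [:: (c, (u ++ b :: a :: v, g))])
    (L2 := [:: (c * t a * al (gen l a) g * chi zeta (gen l a) v, (u ++ v, gen l a + g))])
    (U := [:: (c, (u, 0))]) (V := [:: (1, (v, g))]) h1 (h2 _ _) (inR1 a)).
  by move=> F; rewrite sandwich3 eS !lin1; ring.
have inR2 : mulS zeta (xS C l a) (xS C l b) ++ scaleS (-1) (mulS zeta (xS C l b) (xS C l a))
      \in rels l zeta t.
  rewrite /rels mem_cat; apply/orP; right; apply/mapP; exists (a, b) => //.
  rewrite mem_enum /=; move: hab => /nandP hab.
  by apply/andP; split; apply/eqP => hd; move: hd => /= hd; case: hab => /eqP hab; move: nea => /eqP nea; lia.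
apply: (NF_combine (L1 := [:: (c, (u ++ b :: a :: v, g))]) (L2 := [::])
    (U := [:: (c, (u, 0))]) (V := [:: (1, (v, g))]) h1 NF_nil inR2).
by move=> F; rewrite sandwich2 !lin1 lin_nil; ring.
Qed.

Lemma NF_all w c g : NF [:: (c, (w, g))].
Proof.
suff H : forall N M w, (size w <= N)%N -> (inv w <= M)%N -> forall c g, NF [:: (c, (w, g))].
  exact: (H (size w) (inv w)).
elim=> [|N IHN] M {}w.
  by case: w => // _ _ c' g'; apply: NF_sorted.
elim: M w => [|M IHM] {}w hs hi c' g'.
  case: (boolP (sortedw w)) => sw; first exact: NF_sorted.
  have [u [a [b [v [ew hba]]]]] := descent sw.
  by move: hi; rewrite ew inv_swap.
case: (boolP (sortedw w)) => sw; first exact: NF_sorted.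
have [u [a [b [v [ew hba]]]]] := descent sw.
move: hs hi; rewrite ew => hs hi.
apply: NF_step => //.
  apply: IHM; first by move: hs; rewrite !size_cat.
  by move: hi; rewrite inv_swap.
move=> c'' g''; apply: (IHN (inv (u ++ v))) => //.
by move: hs; rewrite !size_cat /=; lia.
Qed.

Lemma NF_any a : NF a.
Proof.
elim: a => [|x a IH]; first exact: NF_nil.
by rewrite -cat1s; apply: NF_cat => //; case: x => c [w g]; apply: NF_all.
Qed.

End TAlg.

Theorem proposition1p1 (C : numClosedFieldType) (n l : nat) (zeta : C) (t : 'I_n -> C)
  (hn : (3 <= n)%N) (hl : (2 <= l)%N) (hz : l.-primitive_root zeta) :
  exists Theta : S C n l -> T C n l,
    (forall a b, eqS a b -> eqT (Theta a) (Theta b)) /\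
    (forall a b, eqT (Theta (a ++ b)) (Theta a ++ Theta b)) /\
    (forall c a, eqT (Theta (scaleS c a)) (scaleT c (Theta a))) /\
    (forall a b, eqT (Theta (mulS zeta a b)) (mulT zeta (Theta a) (Theta b))) /\
    eqT (Theta (oneS C n l)) (oneT C n l) /\
    (forall i, eqT (Theta (xS C l i)) (thetaX l zeta t i)) /\
    (forall i, eqT (Theta (gS C (gen l i))) (gT C (gen l i))) /\
    (forall a, eqT (Theta a) [::] <-> inIdeal zeta t a).
Proof.
have [m em] : exists m, n = m.+3 by exists (n - 3)%N; lia.
subst n.
exists (Theta zeta t).
split.
  move=> a b e; apply/(leqvP (Theta zeta t a)) => F; rewrite !lin_Theta.
  by move/(leqvP a b): e => ->.
split; first by move=> a b; rewrite Theta_cat.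
split; first by move=> c a; apply/leqvP => F; apply: Theta_scale.
split; first by move=> a b; apply/leqvP => F; apply: Theta_mul.
split; first by apply/leqvP => F; apply: Theta_one.
split; first by move=> i; apply/leqvP => F; apply: Theta_xS.
split; first by move=> i; apply/leqvP => F; apply: Theta_gS.
move=> a; split; last first.
  by move=> hI; apply/leqvP => F; rewrite lin_nil; apply: (Theta_ideal hl hz hI).
move/leqvP => h0.
have [a' [s [hs [hr e]]]] := NF_any t hl hz a.
have hI : forall F, lin (Theta zeta t (idl zeta s)) F = 0.
  by apply: (Theta_ideal hl hz); exists s; split.
have ha' : forall F, lin (Theta zeta t a') F = 0.
  move=> F; have := h0 F; rewrite lin_nil !lin_Theta e lin_cat -!lin_Theta hI addr0.
  by rewrite lin_Theta.
have z := indep hl hz hs ha'.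
exists s; split => //; apply/leqvP => F.
have -> : lin a F = lin a' F + lin (idl zeta s) F by rewrite e lin_cat.
have -> : lin a' F = 0.
  have hl0 : leqv a' [::] by apply/leqvP => k; rewrite z /coef big_nil.
  by rewrite hl0 lin_nil.
by rewrite add0r.
Qed.
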